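(* Let $\hat Q^\pi\in\mathcal H$ be the kernel TD estimator, i.e. a function satisfying $$\hat Q^\pi\in\arg\min_{f\in\mathcal H}\ \frac1n\sum_{i=1}^n\Big(f(\omega_0^{(i)})-r(\omega_0^{(i)})-\gamma\hat Q^\pi(\omega_1^{(i)})\Big)^2+\lambda\|f\|_{\mathcal H}^2 .$$ Then $\hat Q^\pi$ has the closed form $$\hat Q^\pi=K(\cdot,\boldsymbol\omega_0)\,\mathbf b^\pi=\sum_{i=1}^n b^\pi_i K(\cdot,\omega_0^{(i)}),\qquad \mathbf b^\pi=\big[\mathbf K+\lambda n\mathrm I-\gamma\mathbf C\big]^{-1}\mathbf r,$$ where $\mathbf K_{i,j}=K(\omega_0^{(i)},\omega_0^{(j)})$, $\mathbf C_{i,j}=K(\omega_1^{(i)},\omega_0^{(j)})$ and $\mathbf r=[r(\omega_0^{(1)}),\dots,r(\omega_0^{(n)})]^\top$.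
   Context: Markov decision process $(\mathcal S,\mathcal A,P,r,\gamma)$ with compact convex $\mathcal S\subset\mathbb R^{d_s}$, $\mathcal A\subset\mathbb R^{d_a}$, transition density $P(\cdot\mid s,a)$, reward $r:\mathcal S\times\mathcal A\to\mathbb R$, discount $\gamma\in[0,1]$; $\pi$ is a fixed policy. Write $\omega=(s,a)$. $K$ is a symmetric positive definite kernel on $\mathcal S\times\mathcal A$ with $\max_\omega K(\omega,\omega)<\infty$, $\mathcal H$ its RKHS, and $\lambda>0$. Data: for $i=1,\dots,n$, independently $s_0^{(i)}\sim\mu_0$, $a_0^{(i)}\sim\pi(\cdot\mid s_0^{(i)})$, $s_1^{(i)}\sim P(\cdot\mid s_0^{(i)},a_0^{(i)})$, $a_1^{(i)}\sim\pi(\cdot\mid s_1^{(i)})$, where $\mu_0$ is a chosen initial state distribution; $\omega_j^{(i)}=(s_j^{(i)},a_j^{(i)})$ for $j=0,1$, and $\boldsymbol\omega_0=(\omega_0^{(1)},\dots,\omega_0^{(n)})$. *)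

(* Defs.v *)
From HB Require Import structures.
From mathcomp Require Import all_boot all_order all_algebra.
From mathcomp Require Import all_classical all_reals all_analysis.
Set Implicit Arguments. Unset Strict Implicit. Unset Printing Implicit Defensive.
Import Order.TTheory GRing.Theory Num.Theory.
Import numFieldNormedType.Exports.
Local Open Scope ring_scope.
Local Open Scope classical_set_scope.

Definition convex_rV (R : realType) (d : nat) (S : set 'rV[R]_d) : Prop :=
  forall x y (t : R), S x -> S y -> 0 <= t -> t <= 1 -> S (t *: x + (1 - t) *: y).

Definition SA (R : realType) (ds da : nat) (S : set 'rV[R]_ds) (A : set 'rV[R]_da) :=
  {w : 'rV[R]_ds * 'rV[R]_da | S w.1 /\ A w.2}.

Definition sym_pd_kernel (R : realType) (X : Type) (K : X -> X -> R) : Prop :=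
  (forall x y, K x y = K y x) /\
  (forall (m : nat) (x : 'I_m -> X) (c : 'I_m -> R),
      0 <= \sum_(i < m) \sum_(j < m) c i * c j * K (x i) (x j)).

(* (H, ip, feat) is the reproducing kernel Hilbert space of K on X:
   H is a real inner-product space, complete for the induced norm; each
   element f of H is identified with the function x |-> ip f (feat x)
   (this identification is injective), and feat x = K(., x), i.e.
   K x y = ip (feat x) (feat y) (reproducing property). *)
Definition rkhs_norm (R : realType) (H : lmodType R) (ip : H -> H -> R) (f : H) : R :=
  Num.sqrt (ip f f).

Definition is_RKHS (R : realType) (X : Type) (K : X -> X -> R)
    (H : lmodType R) (ip : H -> H -> R) (feat : X -> H) : Prop :=
  (forall f g, ip f g = ip g f) /\
      (forall (a : R) f g h, ip (a *: f + g) h = a * ip f h + ip g h) /\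
      (forall f, f != 0 -> 0 < ip f f) /\
      (forall u : nat -> H,
         (forall e : R, 0 < e -> exists N : nat, forall m n : nat,
              (N <= m)%N -> (N <= n)%N -> rkhs_norm ip (u m - u n) < e) ->
         exists f : H, forall e : R, 0 < e -> exists N : nat, forall n : nat,
              (N <= n)%N -> rkhs_norm ip (u n - f) < e) /\
      (forall f, (forall x, ip f (feat x) = 0) -> f = 0) /\
      (forall x y, K x y = ip (feat x) (feat y)).

Definition rkhs_eval (R : realType) (X : Type) (H : lmodType R)
    (ip : H -> H -> R) (feat : X -> H) (f : H) (x : X) : R := ip f (feat x).

Definition td_objective (R : realType) (X : Type) (H : lmodType R)
    (ip : H -> H -> R) (feat : X -> H) (r : X -> R) (gamma lambda : R)
    (n : nat) (w0 w1 : 'I_n -> X) (Q f : H) : R :=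
  n%:R^-1 * \sum_(i < n)
     (rkhs_eval ip feat f (w0 i) - r (w0 i) - gamma * rkhs_eval ip feat Q (w1 i)) ^+ 2
  + lambda * (rkhs_norm ip f) ^+ 2.

(* Main.v *)
Require Import Defs.
From HB Require Import structures.
From mathcomp Require Import all_boot all_order all_algebra.
From mathcomp Require Import all_classical all_reals all_analysis.
From mathcomp Require Import ring lra.
Import Order.TTheory GRing.Theory Num.Theory.
Import numFieldNormedType.Exports.
Local Open Scope ring_scope.
Local Open Scope classical_set_scope.

Section IP.
Context {R : realType} {H : lmodType R} {ip : H -> H -> R}.
Hypothesis hsym : forall f g, ip f g = ip g f.
Hypothesis hlin : forall a f g h, ip (a *: f + g) h = a * ip f h + ip g h.

Lemma ip0l h : ip 0 h = 0.
Proof. have := hlin 1 0 0 h; rewrite scaler0 addr0 mul1r => e. lra. Qed.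
Lemma ipDl f g h : ip (f + g) h = ip f h + ip g h.
Proof. by have := hlin 1 f g h; rewrite scale1r mul1r. Qed.
Lemma ipZl a f h : ip (a *: f) h = a * ip f h.
Proof. by have := hlin a f 0 h; rewrite !addr0 ip0l addr0. Qed.
Lemma ipDr f g h : ip h (f + g) = ip h f + ip h g.
Proof. by rewrite hsym ipDl hsym (hsym g). Qed.
Lemma ipZr a f h : ip h (a *: f) = a * ip h f.
Proof. by rewrite hsym ipZl hsym. Qed.
Lemma ip_suml (I : Type) (s : seq I) (P : pred I) (F : I -> H) h :
  ip (\sum_(i <- s | P i) F i) h = \sum_(i <- s | P i) ip (F i) h.
Proof. by elim/big_rec2: _ => [|i y1 y2 _ <-]; rewrite ?ip0l ?ipDl. Qed.
End IP.

Lemma quad0 (R : realType) (L M : R) : 0 <= M ->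
  (forall t, 0 <= 2 * t * L + t ^+ 2 * M) -> L = 0.
Proof.
move=> hM h.
pose t := - L / (M + 1).
have ht : L = - (t * (M + 1)).
  rewrite /t; field. apply/eqP => E. lra.
have := h t; clearbody t; rewrite ht => h2.
have t0 : t = 0 by nra.
by rewrite t0 mul0r oppr0.
Qed.

Lemma sum_sq_exp (R : realType) (n : nat) (e c : 'I_n -> R) (t : R) :
  \sum_(i < n) (e i + t * c i) ^+ 2 =
  \sum_(i < n) e i ^+ 2 + 2 * t * \sum_(i < n) (e i * c i)
  + t ^+ 2 * \sum_(i < n) c i ^+ 2.
Proof.
rewrite !mulr_sumr -!big_split /=; apply eq_bigr => i _; ring.
Qed.

Theorem proposition1 (R : realType) (ds da : nat)
    (S : set 'rV[R]_ds) (A : set 'rV[R]_da)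
    (hS : compact S) (hSc : convex_rV S) (hA : compact A) (hAc : convex_rV A)
    (r : SA S A -> R) (gamma lambda : R)
    (hg0 : 0 <= gamma) (hg1 : gamma <= 1) (hl : 0 < lambda)
    (K : SA S A -> SA S A -> R) (hK : sym_pd_kernel K)
    (hKb : exists M : R, forall w, K w w <= M)
    (H : lmodType R) (ip : H -> H -> R) (feat : SA S A -> H)
    (hH : is_RKHS K ip feat)
    (n : nat) (hn : (0 < n)%N) (w0 w1 : 'I_n -> SA S A) (Qhat : H)
    (hQ : forall f : H,
        td_objective ip feat r gamma lambda w0 w1 Qhat Qhat
        <= td_objective ip feat r gamma lambda w0 w1 Qhat f)
    (hinv : (\matrix_(i < n, j < n) K (w0 i) (w0 j)
             + (lambda * n%:R)%:M
             - gamma *: \matrix_(i < n, j < n) K (w1 i) (w0 j)) \in unitmx) :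
  let Kmat := \matrix_(i < n, j < n) K (w0 i) (w0 j) in
  let Cmat := \matrix_(i < n, j < n) K (w1 i) (w0 j) in
  let rvec := \col_(i < n) r (w0 i) in
  let b := invmx (Kmat + (lambda * n%:R)%:M - gamma *: Cmat) *m rvec in
  Qhat = \sum_(i < n) b i ord0 *: feat (w0 i).
Proof.
move=> Kmat Cmat rvec b.
case: hH => hsym [hlin [hpos [_ [_ hrep]]]].
have hn0 : 0 < (n%:R : R) by rewrite ltr0n.
have ipge0 : forall f, 0 <= ip f f.
  move=> f; case: (eqVneq f 0) => [->|nz]; first by rewrite ip0l.
  exact/ltW/hpos.
have nsq : forall f, rkhs_norm ip f ^+ 2 = ip f f.
  by move=> f; rewrite /rkhs_norm sqr_sqrtr.
pose e := fun i => ip Qhat (feat (w0 i)) - r (w0 i) - gamma * ip Qhat (feat (w1 i)).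
pose v := \sum_(i < n) e i *: feat (w0 i) + (lambda * n%:R) *: Qhat.
pose c := fun i => ip v (feat (w0 i)).
pose L := n%:R^-1 * \sum_(i < n) (e i * c i) + lambda * ip Qhat v.
pose Mq := n%:R^-1 * \sum_(i < n) c i ^+ 2 + lambda * ip v v.
have hexp : forall t, td_objective ip feat r gamma lambda w0 w1 Qhat (Qhat + t *: v)
   = td_objective ip feat r gamma lambda w0 w1 Qhat Qhat + 2 * t * L + t ^+ 2 * Mq.
  move=> t; rewrite /td_objective /rkhs_eval !nsq.
  have -> : \sum_(i < n) (ip (Qhat + t *: v) (feat (w0 i)) - r (w0 i) -
        gamma * ip Qhat (feat (w1 i))) ^+ 2 = \sum_(i < n) (e i + t * c i) ^+ 2.
    apply eq_bigr => i _; rewrite (ipDl hlin) (ipZl hlin) /e /c; ring.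
  rewrite sum_sq_exp.
  rewrite (ipDl hlin) !(ipDr hsym hlin) !(ipZl hlin) !(ipZr hsym hlin) (hsym v Qhat).
  rewrite /L /Mq; ring.
have hL : L = n%:R^-1 * ip v v.
  rewrite /L {2}/v (ipDl hlin) (ip_suml hlin) (ipZl hlin).
  have -> : \sum_(i < n) ip (e i *: feat (w0 i)) v = \sum_(i < n) (e i * c i).
    by apply eq_bigr => i _; rewrite (ipZl hlin) /c hsym.
  field; apply/eqP => E; lra.
have L0 : L = 0.
  apply: (@quad0 _ L Mq).
    rewrite /Mq; apply: addr_ge0; last by apply: mulr_ge0; [lra| exact: ipge0].
    apply: mulr_ge0; first by rewrite invr_ge0; lra.
    by apply: sumr_ge0 => i _; apply: sqr_ge0.
  move=> t; have := hQ (Qhat + t *: v); rewrite hexp; lra.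
have v0 : v = 0.
  apply/eqP; apply: contraT => nz; have := hpos _ nz.
  have : n%:R^-1 * ip v v = 0 by rewrite -hL.
  move/eqP; rewrite mulf_eq0 invr_eq0 => /orP[|/eqP->]; last by rewrite ltxx.
  by move=> /eqP E; move: hn0; rewrite E ltxx.
pose a := fun i => - (lambda * n%:R)^-1 * e i.
have hln : lambda * n%:R != 0 by apply/eqP => E; nra.
have hQe : Qhat = \sum_(i < n) a i *: feat (w0 i).
  have : (lambda * n%:R) *: Qhat = - \sum_(i < n) e i *: feat (w0 i).
    by apply/eqP; rewrite -addr_eq0 addrC -/v v0.
  move=> E; rewrite -[Qhat](scalerK hln) E scalerN -scaleNr scaler_sumr.
  by apply eq_bigr => i _; rewrite scalerA /a mulNr.
have hQ0 : forall x, ip Qhat (feat x) = \sum_(j < n) K x (w0 j) * a j.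
  move=> x; rewrite {1}hQe (ip_suml hlin); apply eq_bigr => j _.
  by rewrite (ipZl hlin) hrep hsym mulrC.
pose acol := \col_(i < n) a i.
have hM : (Kmat + (lambda * n%:R)%:M - gamma *: Cmat) *m acol = rvec.
  apply/matrixP => i j; rewrite (ord1 j).
  rewrite mulmxBl mulmxDl mul_scalar_mx -scalemxAl !mxE.
  have -> : \sum_(j0 < n) Kmat i j0 * acol j0 ord0 = ip Qhat (feat (w0 i)).
    by rewrite hQ0; apply eq_bigr => k _; rewrite !mxE.
  have -> : \sum_(j0 < n) Cmat i j0 * acol j0 ord0 = ip Qhat (feat (w1 i)).
    by rewrite hQ0; apply eq_bigr => k _; rewrite !mxE.
  rewrite /a /e; field.
  by apply/andP; split; apply/eqP => E; [move: hn0; rewrite E ltxx | lra].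
have hb : b = acol by rewrite /b -hM mulKmx.
by rewrite {1}hQe; apply eq_bigr => i _; rewrite hb mxE.
Qed.
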